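(* Let $\mathcal{H}_A$ and $\mathcal{H}_B$ be complex Hilbert spaces, let $\hat A$ be a bounded Hermitian operator on $\mathcal{H}_A\otimes\mathcal{H}_B$, and let $g_0$, $|a_0,b_0\rangle$ be a solution of the separability eigenvalue equations of $\hat A$. Then: (1) For any orthonormal bases $\{|a_k\rangle\}_{k}$ of $\mathcal{H}_A$ and $\{|b_l\rangle\}_{l}$ of $\mathcal{H}_B$ which contain $|a_0\rangle$ and $|b_0\rangle$ respectively (with index $0$), one has $\hat A|a_0,b_0\rangle=g_0|a_0,b_0\rangle+\sum_{k\neq0,\,l\neq0}\psi_{k,l}|a_k,b_l\rangle$ for some coefficients $\psi_{k,l}\in\mathbb{C}$; that is, the coefficient of $|a_0,b_0\rangle$ is $g_0$ and the coefficients of $|a_k,b_0\rangle$ ($k\neq0$) and $|a_0,b_l\rangle$ ($l\neq0$) vanish. (2) If $g_1\neq g_0$ and $g_1$, $|a_1,b_0\rangle$ is another solution, then $\langle a_0|a_1\rangle=0$; likewise, if $g_1\neq g_0$ and $g_1$, $|a_0,b_1\rangle$ is another solution, then $\langle b_0|b_1\rangle=0$. (3) If $g_1\neq g_0$ and $g_1$, $|a_1,b_1\rangle$ is another solution, then $|a_0,b_0\rangle$ and $|a_1,b_1\rangle$ are linearly independent.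
   Context: Notation: $|a,b\rangle=|a\rangle\otimes|b\rangle$. For $|a\rangle\in\mathcal{H}_A$, $\hat A_a=\langle a|\hat A|a\rangle$ denotes the operator on $\mathcal{H}_B$ with $\langle b'|\hat A_a|b\rangle=\langle a,b'|\hat A|a,b\rangle$; for $|b\rangle\in\mathcal{H}_B$, $\hat A_b=\langle b|\hat A|b\rangle$ denotes the operator on $\mathcal{H}_A$ with $\langle a'|\hat A_b|a\rangle=\langle a',b|\hat A|a,b\rangle$. A solution of the separability eigenvalue equations of $\hat A$ is a real number $g$ together with unit vectors $|a\rangle\in\mathcal{H}_A$, $|b\rangle\in\mathcal{H}_B$ such that $\hat A_b|a\rangle=g|a\rangle$ and $\hat A_a|b\rangle=g|b\rangle$; it is written $g,|a,b\rangle$. *)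

(* Defs.v *)
From HB Require Import structures.
From mathcomp Require Import all_boot all_order all_algebra.
From mathcomp Require Import complex.
From mathcomp Require Import reals.
Set Implicit Arguments. Unset Strict Implicit. Unset Printing Implicit Defensive.
Import Order.TTheory GRing.Theory Num.Theory.
Local Open Scope ring_scope.
Local Open Scope complex_scope.

Section Hilbert.
Variable R : realType.
Local Notation C := R[i].

(* Inner product, physics convention: <x|y> is antilinear in x, linear in y. *)
Definition is_inner_product (V : lmodType C) (ip : V -> V -> C) : Prop :=
  [/\ (forall x y z, ip x (y + z) = ip x y + ip x z),
      (forall x (c : C) y, ip x (c *: y) = c * ip x y),
      (forall x y, ip y x = (ip x y)^*),
      (forall x, 0 <= ip x x) &
      (forall x, ip x x = 0 -> x = 0)].

Definition dist2 (V : lmodType C) (ip : V -> V -> C) (x y : V) : C :=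
  ip (x - y) (x - y).

Definition is_complete (V : lmodType C) (ip : V -> V -> C) : Prop :=
  forall u : nat -> V,
    (forall eps : R, 0 < eps -> exists N : nat, forall m n : nat,
        (N <= m)%N -> (N <= n)%N -> dist2 ip (u m) (u n) < eps%:C) ->
    exists l : V, forall eps : R, 0 < eps -> exists N : nat, forall n : nat,
        (N <= n)%N -> dist2 ip (u n) l < eps%:C.

Definition is_hilbert (V : lmodType C) (ip : V -> V -> C) : Prop :=
  is_inner_product ip /\ is_complete ip.

(* This characterizes the
   Hilbert-space tensor product up to unitary isomorphism. *)
Definition is_hilbert_tensor (HA HB H : lmodType C)
    (ipA : HA -> HA -> C) (ipB : HB -> HB -> C) (ipH : H -> H -> C)
    (tens : HA -> HB -> H) : Prop :=
  [/\ (forall (c : C) a a' b, tens (c *: a + a') b = c *: tens a b + tens a' b),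
      (forall (c : C) a b b', tens a (c *: b + b') = c *: tens a b + tens a b'),
      (forall a a' b b', ipH (tens a b) (tens a' b') = ipA a a' * ipB b b') &
      (forall (x : H) (eps : R), 0 < eps -> exists s : seq (C * HA * HB),
          dist2 ipH x (\sum_(t <- s) t.1.1 *: tens t.1.2 t.2) < eps%:C)].

Definition is_bounded_hermitian (H : lmodType C) (ip : H -> H -> C)
    (A : H -> H) : Prop :=
  [/\ (forall (c : C) x y, A (c *: x + y) = c *: A x + A y),
      (exists M : R, forall x, ip (A x) (A x) <= M%:C * ip x x) &
      (forall x y, ip (A x) y = ip x (A y))].

Definition is_onb (V : lmodType C) (ip : V -> V -> C) (I : eqType)
    (e : I -> V) : Prop :=
  (forall k l, ip (e k) (e l) = if k == l then 1 else 0) /\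
  (forall x, (forall k, ip (e k) x = 0) -> x = 0).

(* g, |a,b> solves the separability eigenvalue equations of A:
   |a>, |b> unit vectors, A_b|a> = g|a> and A_a|b> = g|b>, where the partial
   operators are given by their matrix elements
   <a'|A_b|a> = <a',b|A|a,b> and <b'|A_a|b> = <a,b'|A|a,b>; the equation
   A_b|a> = g|a> is written out as equality of all matrix elements
   <a'|A_b|a> = g <a'|a>. *)
Definition sep_eig (HA HB H : lmodType C)
    (ipA : HA -> HA -> C) (ipB : HB -> HB -> C) (ipH : H -> H -> C)
    (tens : HA -> HB -> H) (A : H -> H) (g : R) (a : HA) (b : HB) : Prop :=
  [/\ ipA a a = 1, ipB b b = 1,
      (forall a' : HA, ipH (tens a' b) (A (tens a b)) = g%:C * ipA a' a) &
      (forall b' : HB, ipH (tens a b') (A (tens a b)) = g%:C * ipB b' b)].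

End Hilbert.

(* Main.v *)
Require Import Defs.
From HB Require Import structures.
From mathcomp Require Import all_boot all_order all_algebra.
From mathcomp Require Import complex.
From mathcomp Require Import reals.
Import Order.TTheory GRing.Theory Num.Theory.
Local Open Scope ring_scope.
Local Open Scope complex_scope.

Theorem proposition1 (R : realType) (HA HB H : lmodType R[i])
    (ipA : HA -> HA -> R[i]) (ipB : HB -> HB -> R[i]) (ipH : H -> H -> R[i])
    (tens : HA -> HB -> H) (A : H -> H) (g0 : R) (a0 : HA) (b0 : HB) :
  is_hilbert ipA -> is_hilbert ipB -> is_hilbert ipH ->
  is_hilbert_tensor ipA ipB ipH tens ->
  is_bounded_hermitian ipH A ->
  sep_eig ipA ipB ipH tens A g0 a0 b0 ->
  (* (1) coefficients of A|a0,b0> in the product basis |a_k,b_l> *)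
  (forall (I J : eqType) (k0 : I) (l0 : J) (ea : I -> HA) (eb : J -> HB),
      is_onb ipA ea -> is_onb ipB eb -> ea k0 = a0 -> eb l0 = b0 ->
      [/\ ipH (tens a0 b0) (A (tens a0 b0)) = g0%:C,
          (forall k, k != k0 -> ipH (tens (ea k) b0) (A (tens a0 b0)) = 0) &
          (forall l, l != l0 -> ipH (tens a0 (eb l)) (A (tens a0 b0)) = 0)])
  /\
  (* (2) *)
  (forall (g1 : R) (a1 : HA), g1 != g0 ->
      sep_eig ipA ipB ipH tens A g1 a1 b0 -> ipA a0 a1 = 0)
  /\
  (forall (g1 : R) (b1 : HB), g1 != g0 ->
      sep_eig ipA ipB ipH tens A g1 a0 b1 -> ipB b0 b1 = 0)
  /\
  (* (3) linear independence *)
  (forall (g1 : R) (a1 : HA) (b1 : HB), g1 != g0 ->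
      sep_eig ipA ipB ipH tens A g1 a1 b1 ->
      forall c d : R[i], c *: tens a0 b0 + d *: tens a1 b1 = 0 -> c = 0 /\ d = 0).
Proof.
move=> [[ipAD ipAZ ipAC ipA0 ipAd] _] [[ipBD ipBZ ipBC ipB0 ipBd] _]
  [[ipD ipZ ipC ip0 ipd] _] [tl tr tip _] [Alin _ Aher] [a0n b0n EA EB].
have conjR : forall g : R, conjc (g%:C : R[i]) = g%:C by move=> g; apply: conjc_real.
have conjM : forall x y : R[i], conjc (x * y) = conjc x * conjc y.
  by move=> x y; apply: rmorphM.
have gneq : forall g1 g2 : R, g1 != g2 -> g1%:C - g2%:C != 0 :> R[i].
  move=> g1 g2 ne; rewrite subr_eq0; apply/negP => /eqP E.
  by move/eqP: ne; apply; apply: complexI.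
split.
  move=> I J k0 l0 ea eb [oa _] [ob _] ek el; split.
  - by rewrite EA a0n mulr1.
  - move=> k nk; rewrite EA -ek oa (negbTE nk) mulr0 //.
  - move=> l nl; rewrite EB -el ob (negbTE nl) mulr0 //.
split.
  move=> g1 a1 ne [a1n _ E1 _].
  have h1 := E1 a0.
  rewrite -Aher ipC EA conjM conjR -ipAC in h1.
  have : (g1%:C - g0%:C) * ipA a0 a1 = 0 by rewrite mulrBl h1 subrr.
  by move/eqP; rewrite mulf_eq0 (negbTE (gneq _ _ ne)) /= => /eqP.
split.
  move=> g1 b1 ne [_ b1n _ E1].
  have h1 := E1 b0.
  rewrite -Aher ipC EB conjM conjR -ipBC in h1.
  have : (g1%:C - g0%:C) * ipB b0 b1 = 0 by rewrite mulrBl h1 subrr.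
  by move/eqP; rewrite mulf_eq0 (negbTE (gneq _ _ ne)) /= => /eqP.
move=> g1 a1 b1 ne [a1n b1n E1 _] c d Hcd.
set x0 := tens a0 b0 in Hcd *; set x1 := tens a1 b1 in Hcd *.
have x0n : ipH x0 x0 = 1 by rewrite tip a0n b0n mulr1.
have x1n : ipH x1 x1 = 1 by rewrite tip a1n b1n mulr1.
have ip00 : forall x, ipH x 0 = 0.
  move=> x; have h := ipD x 0 0; rewrite addr0 in h.
  by apply: (addrI (ipH x 0)); rewrite addr0 -h.
have ipZl : forall (l : R[i]) x y, ipH (l *: x) y = conjc l * ipH x y.
  by move=> l x y; rewrite ipC ipZ conjM -ipC.
have A0 : A 0 = 0.
  have h := Alin 1 0 0; rewrite scaler0 add0r scale1r in h.
  by apply: (addrI (A 0)); rewrite addr0 -h.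
have AZ : forall (l : R[i]) x, A (l *: x) = l *: A x.
  by move=> l x; rewrite -[l *: x]addr0 Alin A0 addr0.
have g0e : ipH x0 (A x0) = g0%:C by rewrite EA a0n mulr1.
have g1e : ipH x1 (A x1) = g1%:C by rewrite E1 a1n mulr1.
have dz : d = 0.
  apply/eqP; apply/negP => /negP dn.
  have ex : x1 = (- c / d) *: x0.
    have h : d *: (x1 - (- c / d) *: x0) = 0.
      by rewrite scalerBr scalerA mulrCA (mulfV dn) mulr1 scaleNr opprK addrC.
    apply/eqP; rewrite -subr_eq0; apply/eqP.
    have -> : x1 - (- c / d) *: x0 = d^-1 *: (d *: (x1 - (- c / d) *: x0)).
      by rewrite scalerA (mulVf dn) scale1r.
    by rewrite h scaler0.
  move: (- c / d) ex => l ex.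
  have ll : conjc l * l = 1 by rewrite -x1n ex ipZl ipZ x0n mulr1.
  have : g1%:C = g0%:C :> R[i] by rewrite -g1e ex AZ ipZl ipZ g0e mulrA ll mul1r.
  by move=> E; move/eqP: ne; apply; apply: complexI.
split => //.
move: Hcd. rewrite dz. rewrite scale0r. rewrite addr0 => Hc.
have h := ipZ x0 c x0. rewrite Hc in h. rewrite ip00 x0n mulr1 in h. by rewrite h.

Qed.
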